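(* Let $\mathcal S$ be a Sawtooth model with $n$ upper particles, let $1\le r\le n+1$, and let $\mathcal X$ be an event of positive probability in the $\sigma$-algebra generated by all the particles other than $X_r$. Then the conditional density $x\mapsto d_{X_r\mid\mathcal X}(x)$ is (a version of) a nonincreasing function on $[0,1]$. Similarly, for $1\le r\le n$ and $\mathcal X$ an event of positive probability generated by the particles other than $Y_r$, $y\mapsto d_{Y_r\mid\mathcal X}(y)$ is nondecreasing.
   Context: A (type $--$) Sawtooth model with $n\ge1$ upper particles is specified by functions $f_1,g_1,\dots,f_n,g_n:[0,1]\to[0,\infty)$, each nondecreasing, $C^1$ and not identically zero. It is the probability space $[0,1]^{n+1}\times[0,1]^n$ with probability density at $(x_1,\dots,x_{n+1},y_1,\dots,y_n)$ equal to $\frac{1}{\mathcal V}\prod_{i=1}^n\mathbf 1_{\{x_i\le y_i\}}\mathbf 1_{\{x_{i+1}\le y_i\}}f_i(y_i-x_i)\,g_i(y_i-x_{i+1})$, $\mathcal V$ being the normalizing constant. The coordinates $X_1,\dots,X_{n+1}$ are the lower particles and $Y_1,\dots,Y_n$ the upper particles (ordered $X_1,Y_1,X_2,\dots,Y_n,X_{n+1}$); $X_I:=X_1$, $X_F:=X_{n+1}$. Conditional densities $d_{U\mid\cdot}$ and conditional cumulative distribution functions $F_{U\mid V=v}(t)=\mathbb P(U\le t\mid V=v)$ are those computed from the joint density. *)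

(* Defs.v *)
From HB Require Import structures.
From mathcomp Require Import all_boot all_order all_algebra.
From mathcomp Require Import all_classical all_reals all_analysis.
Set Implicit Arguments. Unset Strict Implicit. Unset Printing Implicit Defensive.
Import Order.TTheory GRing.Theory Num.Theory.
Import numFieldNormedType.Exports.
Local Open Scope classical_set_scope.
Local Open Scope ring_scope.

Section sawtooth.
Context {R : realType}.

(* iterated Lebesgue integral over the cube [0,1]^k, first coordinate outermost *)
Fixpoint cube_int (k : nat) : (k.-tuple R -> \bar R) -> \bar R :=
  match k return (k.-tuple R -> \bar R) -> \bar R with
  | 0 => fun F => F [tuple]
  | k'.+1 => fun F =>
      (\int[@lebesgue_measure R]_(x in `[0%R, 1%R]) cube_int (fun t => F [tuple of x :: t]))%E
  end.

Definition ins (k m : nat) (x : R) (z : k.-tuple R) : k.+1.-tuple R :=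
  [tuple nth 0 (take m z ++ x :: drop m z) j | j < k.+1].

Definition others (k m : nat) : 'I_k -> k.+1.-tuple R -> R :=
  fun j w => nth 0 w (bump m j).

Variables (n : nat) (f g : 'I_n -> R -> R).

(* sample point w = (X_1, Y_1, X_2, ..., Y_n, X_{n+1}) ; 0-indexed particles *)
Definition Xp (w : (2 * n).+1.-tuple R) (i : nat) : R := nth 0 w (2 * i).
Definition Yp (w : (2 * n).+1.-tuple R) (i : nat) : R := nth 0 w (2 * i).+1.

Definition udens (w : (2 * n).+1.-tuple R) : R :=
  \prod_(i < n) ((Xp w i <= Yp w i)%R%:R * (Xp w i.+1 <= Yp w i)%R%:R *
                 f i (Yp w i - Xp w i) * g i (Yp w i - Xp w i.+1)).

Definition normV : \bar R := cube_int (fun w => (udens w)%:E).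

Definition dens (w : (2 * n).+1.-tuple R) : R := udens w / fine normV.

Definition sprob (E : set ((2 * n).+1.-tuple R)) : \bar R :=
  cube_int (fun w => (\1_E w * dens w)%:E).

Definition cond_dens (m : nat) (E : set ((2 * n).+1.-tuple R)) (x : R) : \bar R :=
  (cube_int (fun z : (2 * n).-tuple R =>
     (\1_E (ins m x z) * dens (ins m x z))%:E) * (sprob E)^-1)%E.

End sawtooth.

Definition C1_on01 {R : realType} (h : R -> R) : Prop :=
  {within `[0%R, 1%R], continuous h} /\
  exists dh : R -> R, {within `[0%R, 1%R], continuous dh} /\
    forall t : R, 0 < t < 1 -> is_derive t 1 h (dh t).

Definition sawtooth_fun {R : realType} (h : R -> R) : Prop :=
  (forall t : R, 0 <= t <= 1 -> 0 <= h t) /\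
  (forall s t : R, 0 <= s -> s <= t -> t <= 1 -> h s <= h t) /\
  C1_on01 h /\
  (exists t : R, 0 <= t <= 1 /\ h t != 0).

(* Main.v *)
Require Import Defs.
From HB Require Import structures.
From mathcomp Require Import all_boot all_order all_algebra.
From mathcomp Require Import all_classical all_reals all_analysis.
From mathcomp Require Import lra zify.
Import Order.TTheory GRing.Theory Num.Theory.
Import numFieldNormedType.Exports.
Local Open Scope classical_set_scope.
Local Open Scope ring_scope.
Section aux.
Context {R : realType}.
Local Notation mu := (@lebesgue_measure R).

Lemma my_le_int (D : set R) (f1 f2 : R -> \bar R) :
  (forall x, D x -> (0 <= f1 x)%E) -> (forall x, D x -> (f1 x <= f2 x)%E) ->
  (\int[mu]_(x in D) f1 x <= \int[mu]_(x in D) f2 x)%E.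
Proof.
move=> f10 f12.
have f20 : forall x, D x -> (0 <= f2 x)%E.
  by move=> x Dx; apply: le_trans (f10 _ Dx) (f12 _ Dx).
rewrite [X in (X <= _)%E]ge0_integralE // [X in (_ <= X)%E]ge0_integralE //.
apply: ereal_sup_le => _ [h hf <-]; exists h => // x.
apply: le_trans (hf x) _; rewrite /patch; case: ifP => // /set_mem Dx.
exact: f12.
Qed.

Definition incube {k} (t : k.-tuple R) := forall j, 0 <= nth 0 t j <= 1.

Lemma incube_cons k (x : R) (t : k.-tuple R) : 0 <= x <= 1 -> incube t ->
  incube [tuple of x :: t].
Proof. by move=> hx ht [|j] //=; apply: ht. Qed.

Lemma cube_ge0 k (F : k.-tuple R -> \bar R) :
  (forall t, incube t -> (0 <= F t)%E) -> (0 <= cube_int F)%E.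
Proof.
elim: k F => [|k IH] F F0 /=.
  by apply: F0 => j; rewrite nth_nil lexx ler01.
apply: integral_ge0 => x hx.
have hx' : 0 <= x <= 1 by move: hx; rewrite /= in_itv.
apply: (IH (fun t => F [tuple of x :: t])) => t ht.
by apply: F0; apply: incube_cons.
Qed.

Lemma cube_le k (F G : k.-tuple R -> \bar R) :
  (forall t, incube t -> (0 <= F t)%E) ->
  (forall t, incube t -> (F t <= G t)%E) -> (cube_int F <= cube_int G)%E.
Proof.
elim: k F G => [|k IH] F G F0 FG /=.
  by apply: FG => j; rewrite nth_nil lexx ler01.
apply: my_le_int => x hx; have hx' : 0 <= x <= 1 by move: hx; rewrite /= in_itv.
  apply: cube_ge0 => t ht.
  by apply: F0; apply: incube_cons.
apply: (IH (fun t => F [tuple of x :: t]) (fun t => G [tuple of x :: t])) => t ht.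
  by apply: F0; apply: incube_cons.
by apply: FG; apply: incube_cons.
Qed.

Lemma cube_ub k (F : k.-tuple R -> \bar R) (B : R) : 0 <= B ->
  (forall t, incube t -> (0 <= F t)%E) ->
  (forall t, incube t -> (F t <= B%:E)%E) -> (cube_int F <= B%:E)%E.
Proof.
move=> B0; elim: k F => [|k IH] F F0 FB /=.
  by apply: FB => j; rewrite nth_nil lexx ler01.
apply: (@le_trans _ _ (\int[mu]_(x in `[0%R, 1%R]) (cst B%:E) x)%E).
  apply: my_le_int => x hx; have hx' : 0 <= x <= 1 by move: hx; rewrite /= in_itv.
    apply: cube_ge0 => t ht.
    by apply: F0; apply: incube_cons.
  apply: (IH (fun t => F [tuple of x :: t])) => t ht.
    by apply: F0; apply: incube_cons.
  by apply: FB; apply: incube_cons.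
rewrite integral_cst //= lebesgue_measure_itv /= lte_fin ltr01.
rewrite oppr0 adde0 mule1.
by [].
Qed.
End aux.

Section aux2.
Context {R : realType}.

Lemma nth_ins_aux k m (x : R) (z : k.-tuple R) j : (m <= k)%N ->
  nth 0 (ins m x z) j = if (j < k.+1)%N then nth 0 (take m z ++ x :: drop m z) j else 0.
Proof.
move=> mk; case: ltnP => hj.
  by rewrite -[j]/(nat_of_ord (Ordinal hj)) /ins nth_mktuple.
by rewrite nth_default // size_tuple.
Qed.

Lemma nth_ins k m (x : R) (z : k.-tuple R) j : (m <= k)%N ->
  nth 0 (ins m x z) j = if j == m then x else nth 0 (ins m 0 z) j.
Proof.
move=> mk; rewrite !nth_ins_aux //.
have sz : size (take m z) = m.
  rewrite size_take size_tuple; case: ltnP => // h; apply/eqP; by rewrite eqn_leq mk h.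
have [->|jm] := eqVneq j m.
  by rewrite ltnS mk nth_cat sz ltnn subnn.
case: ltnP => // _; rewrite !nth_cat sz; case: ltnP => // hmj.
have : (0 < j - m)%N by rewrite subn_gt0 ltn_neqAle eq_sym jm hmj.
by case: (j - m)%N.
Qed.

Lemma incube_ins k m (x : R) (z : k.-tuple R) : (m <= k)%N ->
  0 <= x <= 1 -> incube z -> incube (ins m x z).
Proof.
move=> mk hx hz j; rewrite nth_ins_aux //; case: ltnP => _; last by rewrite lexx ler01.
have sz : size (take m z) = m.
  rewrite size_take size_tuple; case: ltnP => // h; apply/eqP; by rewrite eqn_leq mk h.
rewrite nth_cat sz; case: ltnP => hjm; first by rewrite nth_take //; apply: hz.
case: (j - m)%N => [|i] /=; first exact: hx.
rewrite nth_drop; exact: hz.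
Qed.

Lemma others_ins k m (x y : R) (z : k.-tuple R) (j : 'I_k) : (m <= k)%N ->
  others m j (ins m x z) = others m j (ins m y z).
Proof.
move=> mk; rewrite /others (@nth_ins k m x z (bump m j) mk) (@nth_ins k m y z (bump m j) mk).
by rewrite eq_sym (negbTE (neq_bump m j)).
Qed.

Lemma fiber k m (E : set (k.+1.-tuple R)) :
  g_sigma_preimage (@others R k m) E ->
  forall w w', (forall j, others m j w = others m j w') -> (E w <-> E w').
Proof.
pose S := [set A : set (k.+1.-tuple R) | forall w w',
  (forall j, others m j w = others m j w') -> (A w <-> A w')].
suff : g_sigma_preimage (@others R k m) `<=` S by move=> h hE; exact: (h E hE).
apply: smallest_sub.
  split.
  - by move=> w w' _.
  - move=> A SA w w' hw; rewrite /setD /=; have [h1 h2] := SA w w' hw.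
    by split=> -[_ hA]; split=> // hA'; apply: hA; [apply: h2|apply: h1].
  - move=> A SA w w' hw; split=> -[i _ Ai]; exists i => //; by apply/(SA i w w' hw).
apply: (big_ind (fun X => X `<=` S)).
- by move=> A.
- by move=> X Y hX hY A [hA|hA]; [exact: hX|exact: hY].
- move=> i _ A [B _ <-] w w' hw /=; rewrite /preimage /= hw.
  by split=> -[].
Qed.
End aux2.
Section phi.
Context {R : realType}.
Variables (fi gi : R -> R).
Hypotheses (fp : forall t : R, 0 <= t <= 1 -> 0 <= fi t)
  (fm : forall s t : R, 0 <= s -> s <= t -> t <= 1 -> fi s <= fi t)
  (gp : forall t : R, 0 <= t <= 1 -> 0 <= gi t)
  (gm : forall s t : R, 0 <= s -> s <= t -> t <= 1 -> gi s <= gi t).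

Definition phi (a b c : R) :=
  (a <= b)%R%:R * (c <= b)%R%:R * fi (b - a) * gi (b - c).

Definition in01 (x : R) := 0 <= x <= 1.

Lemma phi_ge0 a b c : in01 a -> in01 b -> in01 c -> 0 <= phi a b c.
Proof.
rewrite /in01 /phi => /andP[a0 a1] /andP[b0 b1] /andP[c0 c1].
have [hab|hab] := leP a b; have [hcb|hcb] := leP c b;
  rewrite /= ?mul0r ?mulr0 ?mul1r ?mul0r //.
by apply: mulr_ge0; [apply: fp|apply: gp]; apply/andP; split; lra.
Qed.

Lemma phi_ub a b c : in01 a -> in01 b -> in01 c -> phi a b c <= fi 1 * gi 1.
Proof.
move=> ha hb hc.
have f10 : 0 <= fi 1 by apply: fp; rewrite ler01 lexx.
have g10 : 0 <= gi 1 by apply: gp; rewrite ler01 lexx.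
move: ha hb hc; rewrite /in01 /phi => /andP[a0 a1] /andP[b0 b1] /andP[c0 c1].
have [hab|hab] := leP a b; have [hcb|hcb] := leP c b;
  rewrite /= ?mul0r ?mulr0 ?mul1r ?mul0r ?mulr_ge0 //.
apply: ler_pM.
- by apply: fp; apply/andP; split; lra.
- by apply: gp; apply/andP; split; lra.
- by apply: fm; lra.
- by apply: gm; lra.
Qed.

Lemma phi_X a a' b c c' : in01 a -> in01 a' -> in01 b -> in01 c -> in01 c' ->
  a <= a' -> c <= c' -> phi a' b c' <= phi a b c.
Proof.
move=> ha ha' hb hc hc' aa cc.
have p0 := @phi_ge0 a b c ha hb hc.
move: ha ha' hb hc hc' p0; rewrite /in01 /phi => /andP[a0 a1] /andP[a0' a1'] /andP[b0 b1] /andP[c0 c1] /andP[c0' c1'].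
have [hab|hab] := leP a' b; have [hcb|hcb] := leP c' b;
  rewrite /= ?mul0r ?mulr0 ?mul1r ?mul0r //.
have -> : (a <= b) = true by apply/idP; lra.
have -> : (c <= b) = true by apply/idP; lra.
move=> _; rewrite /= !mul1r.
apply: ler_pM.
- by apply: fp; apply/andP; split; lra.
- by apply: gp; apply/andP; split; lra.
- by apply: fm; lra.
- by apply: gm; lra.
Qed.

Lemma phi_Y a b b' c : in01 a -> in01 b -> in01 b' -> in01 c ->
  b <= b' -> phi a b c <= phi a b' c.
Proof.
move=> ha hb hb' hc bb.
have p0 := @phi_ge0 a b' c ha hb' hc.
move: ha hb hb' hc p0; rewrite /in01 /phi => /andP[a0 a1] /andP[b0 b1] /andP[b0' b1'] /andP[c0 c1].
have [hab|hab] := leP a b; have [hcb|hcb] := leP c b;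
  rewrite /= ?mul0r ?mulr0 ?mul1r ?mul0r //.
have -> : (a <= b') = true by apply/idP; lra.
have -> : (c <= b') = true by apply/idP; lra.
move=> _; rewrite /= !mul1r.
apply: ler_pM.
- by apply: fp; apply/andP; split; lra.
- by apply: gp; apply/andP; split; lra.
- by apply: fm; lra.
- by apply: gm; lra.
Qed.
End phi.


Section main.
Context {R : realType} (n : nat) (f g : 'I_n -> R -> R).
Hypotheses (fp : forall i (t : R), 0 <= t <= 1 -> 0 <= f i t)
  (fm : forall i (s t : R), 0 <= s -> s <= t -> t <= 1 -> f i s <= f i t)
  (gp : forall i (t : R), 0 <= t <= 1 -> 0 <= g i t)
  (gm : forall i (s t : R), 0 <= s -> s <= t -> t <= 1 -> g i s <= g i t).

Lemma udensE w : udens f g w =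
  \prod_(i < n) phi (f i) (g i) (Xp w i) (Yp w i) (Xp w i.+1).
Proof. by []. Qed.

Lemma nth_mono k m (x x' : R) (z : k.-tuple R) j : (m <= k)%N -> x <= x' ->
  nth 0 (ins m x z) j <= nth 0 (ins m x' z) j.
Proof.
move=> mk xx; rewrite (@nth_ins _ k m x z j mk) (@nth_ins _ k m x' z j mk).
by case: (j == m).
Qed.

Lemma nth_same k m (a b : R) (z : k.-tuple R) j : (m <= k)%N -> j != m ->
  nth 0 (ins m a z) j = nth 0 (ins m b z) j.
Proof.
move=> mk jm; rewrite (@nth_ins _ k m a z j mk) (@nth_ins _ k m b z j mk).
by rewrite (negbTE jm).
Qed.

Lemma udens_ge0 w : incube w -> 0 <= udens f g w.
Proof.
move=> hw; rewrite udensE; apply: prodr_ge0 => i _.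
by apply: phi_ge0 => //; [exact: fp|exact: gp|exact: hw|exact: hw|exact: hw].
Qed.

Lemma udens_ub w : incube w -> udens f g w <= \prod_(i < n) (f i 1 * g i 1).
Proof.
move=> hw; rewrite udensE; apply: ler_prod => i _; apply/andP; split.
  by apply: phi_ge0 => //; [exact: fp|exact: gp|exact: hw|exact: hw|exact: hw].
by apply: phi_ub => //; [exact: fp|exact: fm|exact: gp|exact: gm|exact: hw|exact: hw|exact: hw].
Qed.

Lemma udens_X (r : nat) (hr : (r <= n)%N) (x x' : R) z : 0 <= x -> x <= x' -> x' <= 1 ->
  incube z -> udens f g (ins (2 * r) x' z) <= udens f g (ins (2 * r) x z).
Proof.
move=> x0 xx x1 hz.
have mk : (2 * r <= 2 * n)%N by lia.
have hw : incube (ins (2 * r) x z) by apply: incube_ins => //; apply/andP; split; lra.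
have hw' : incube (ins (2 * r) x' z) by apply: incube_ins => //; apply/andP; split; lra.
rewrite !udensE; apply: ler_prod => i _; apply/andP; split.
  by apply: phi_ge0 => //; [exact: fp|exact: gp|exact: hw'|exact: hw'|exact: hw'].
have -> : Yp (ins (2 * r) x' z) i = Yp (ins (2 * r) x z) i.
  by rewrite /Yp (@nth_same _ _ x' x) //; apply/eqP; lia.
apply: phi_X => //; [exact: fp|exact: fm|exact: gp|exact: gm|exact: hw|exact: hw'|exact: hw|exact: hw|exact: hw'|exact: nth_mono|exact: nth_mono].
Qed.

Lemma udens_Y (r : nat) (hr : (r < n)%N) (x x' : R) z : 0 <= x -> x <= x' -> x' <= 1 ->
  incube z -> udens f g (ins (2 * r).+1 x z) <= udens f g (ins (2 * r).+1 x' z).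
Proof.
move=> x0 xx x1 hz.
have mk : ((2 * r).+1 <= 2 * n)%N by lia.
have hw : incube (ins (2 * r).+1 x z) by apply: incube_ins => //; apply/andP; split; lra.
have hw' : incube (ins (2 * r).+1 x' z) by apply: incube_ins => //; apply/andP; split; lra.
rewrite !udensE; apply: ler_prod => i _; apply/andP; split.
  by apply: phi_ge0 => //; [exact: fp|exact: gp|exact: hw|exact: hw|exact: hw].
have -> : Xp (ins (2 * r).+1 x' z) i = Xp (ins (2 * r).+1 x z) i.
  by rewrite /Xp (@nth_same _ _ x' x) //; apply/eqP; lia.
have -> : Xp (ins (2 * r).+1 x' z) i.+1 = Xp (ins (2 * r).+1 x z) i.+1.
  by rewrite /Xp (@nth_same _ _ x' x) //; apply/eqP; lia.
apply: phi_Y => //; [exact: fp|exact: fm|exact: gp|exact: gm|exact: hw|exact: hw|exact: hw'|exact: hw|exact: nth_mono].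
Qed.

Lemma gen (s : bool) (m : nat) (mk : (m <= 2 * n)%N) (E : set ((2 * n).+1.-tuple R))
  (hE : g_sigma_preimage (@others R (2 * n) m) E)
  (hpos : (0 < sprob f g E)%E)
  (mono : forall (x x' : R) z, 0 <= x -> x <= x' -> x' <= 1 -> incube z ->
     if s then udens f g (ins m x' z) <= udens f g (ins m x z)
     else udens f g (ins m x z) <= udens f g (ins m x' z)) :
  exists h : R -> R,
    (forall x y : R, 0 <= x -> x <= y -> y <= 1 -> if s then h y <= h x else h x <= h y) /\
    {ae @lebesgue_measure R, forall x : R, 0 <= x <= 1 ->
        cond_dens f g m E x = (h x)%:E}.
Proof.
set V := fine (normV f g).
have V0 : 0 <= V.
  apply: fine_ge0; apply: cube_ge0 => t ht; rewrite lee_fin; exact: udens_ge0.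
set K := (\prod_(i < n) (f i 1 * g i 1)) / V.
have dens_ge0 (w : (2 * n).+1.-tuple R) : incube w -> 0 <= dens f g w.
  by move=> hw; rewrite /dens; apply: divr_ge0 => //; exact: udens_ge0.
have ind_ge0 (w : (2 * n).+1.-tuple R) : 0 <= \1_E w :> R by rewrite /indic ler0n.
have ind_le1 (w : (2 * n).+1.-tuple R) : \1_E w <= 1 :> R by rewrite /indic; case: (w \in E).
pose F (x : R) (z : (2 * n).-tuple R) :=
  ((\1_E (ins m x z) * dens f g (ins m x z))%:E : \bar R).
have hwin (x : R) (z : (2 * n).-tuple R) : 0 <= x <= 1 -> incube z -> incube (ins m x z).
  by move=> hx hz; apply: incube_ins.
have F0 (x : R) (z : (2 * n).-tuple R) : 0 <= x <= 1 -> incube z -> (0 <= F x z)%E.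
  move=> hx hz; rewrite lee_fin; apply: mulr_ge0 => //; exact: dens_ge0 (hwin _ _ hx hz).
have FK (x : R) (z : (2 * n).-tuple R) : 0 <= x <= 1 -> incube z -> (F x z <= K%:E)%E.
  move=> hx hz; rewrite lee_fin -[K]mul1r; apply: ler_pM => //.
    exact: dens_ge0 (hwin _ _ hx hz).
  rewrite /dens /K; apply: ler_wpM2r; first by rewrite invr_ge0.
  exact: udens_ub (hwin _ _ hx hz).
have Fmono (x x' : R) (z : (2 * n).-tuple R) : 0 <= x -> x <= x' -> x' <= 1 -> incube z ->
    if s then (F x' z <= F x z)%E else (F x z <= F x' z)%E.
  move=> x0 xx x1 hz.
  have hI : \1_E (ins m x' z) = \1_E (ins m x z) :> R.
    rewrite /indic; suff -> : (ins m x' z \in E) = (ins m x z \in E) by [].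
    apply/idP/idP => /set_mem h; apply/mem_set.
      exact: (@fiber _ _ _ _ hE _ _ (fun j => others_ins (2 * n) m x' x z j mk)).1 h.
    exact: (@fiber _ _ _ _ hE _ _ (fun j => others_ins (2 * n) m x x' z j mk)).1 h.
  move: (mono x x' z x0 xx x1 hz); clear mono.
  case: s => hm; rewrite /F lee_fin hI; apply: ler_wpM2l => //;
    rewrite /dens; apply: ler_wpM2r => //; by rewrite invr_ge0.
pose A x := cube_int (F x).
have A0 (x : R) : 0 <= x <= 1 -> (0 <= A x)%E.
  by move=> hx; apply: cube_ge0 => z hz; exact: F0.
have AK (x : R) : 0 <= x <= 1 -> (A x <= K%:E)%E.
  move=> hx; apply: cube_ub.
  - by apply: divr_ge0 => //; apply: prodr_ge0 => i _; apply: mulr_ge0;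
      [apply: fp|apply: gp]; rewrite ler01 lexx.
  - by move=> z hz; exact: F0.
  - by move=> z hz; exact: FK.
have Afin (x : R) : 0 <= x <= 1 -> A x \is a fin_num.
  by move=> hx; rewrite ge0_fin_numE ?A0 //; exact: le_lt_trans (AK x hx) (ltry _).
have [c [c0 hc]] : exists c : R, 0 <= c /\ (sprob f g E)^-1%E = c%:E.
  move: hpos; case: (sprob f g E) => [r||] //.
  - rewrite lte_fin => r0; exists r^-1; rewrite inver gt_eqF //; split => //.
    by rewrite invr_ge0 ltW.
  - by move=> _; exists 0.
exists (fun x => fine (A x) * c); split.
- move=> x y x0 xy y1.
  have hx : 0 <= x <= 1 by apply/andP; split; lra.
  have hy : 0 <= y <= 1 by apply/andP; split; lra.
  have hA : if s then (A y <= A x)%E else (A x <= A y)%E.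
    case: s mono Fmono => mono Fmono.
    + apply: cube_le => z hz; [exact: F0|exact: Fmono].
    + apply: cube_le => z hz; [exact: F0|exact: Fmono].
  case: s hA {mono Fmono} => hA; apply: ler_wpM2r => //; apply: fine_le => //;
    exact: Afin.
- apply: aeW => x hx.
  rewrite /cond_dens hc.
  change ((A x * c%:E)%E = ((fine (A x) * c)%:E)).
  by rewrite EFinM fineK //; exact: Afin.
Qed.
End main.

Theorem mainTheorem4 (R : realType) (n : nat) (f g : 'I_n -> R -> R)
  (hn : (0 < n)%N)
  (hf : forall i, sawtooth_fun (f i)) (hg : forall i, sawtooth_fun (g i)) :
  (forall (r : 'I_n.+1) (E : set ((2 * n).+1.-tuple R)),
      g_sigma_preimage (@others R (2 * n) (2 * r)) E ->
      (0 < sprob f g E)%E ->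
      exists h : R -> R,
        (forall x y : R, 0 <= x -> x <= y -> y <= 1 -> h y <= h x) /\
        {ae @lebesgue_measure R, forall x : R, 0 <= x <= 1 ->
            cond_dens f g (2 * r) E x = (h x)%:E})
  /\
  (forall (r : 'I_n) (E : set ((2 * n).+1.-tuple R)),
      g_sigma_preimage (@others R (2 * n) (2 * r).+1) E ->
      (0 < sprob f g E)%E ->
      exists h : R -> R,
        (forall x y : R, 0 <= x -> x <= y -> y <= 1 -> h x <= h y) /\
        {ae @lebesgue_measure R, forall y : R, 0 <= y <= 1 ->
            cond_dens f g (2 * r).+1 E y = (h y)%:E}).
Proof.
have fp i := (hf i).1.
have fm i := (hf i).2.1.
have gp i := (hg i).1.
have gm i := (hg i).2.1.
split.
- move=> r E hE hpos.
  have mk : (2 * r <= 2 * n)%N by have := ltn_ord r; lia.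
  apply: (@gen _ _ _ _ fp fm gp gm true _ mk E hE hpos) => x x' z x0 xx x1 hz /=.
  by apply: udens_X => //; have := ltn_ord r; lia.
- move=> r E hE hpos.
  have mk : ((2 * r).+1 <= 2 * n)%N by have := ltn_ord r; lia.
  apply: (@gen _ _ _ _ fp fm gp gm false _ mk E hE hpos) => x x' z x0 xx x1 hz /=.
  by apply: udens_Y => //.
Qed.
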